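(* Let $\rho_Q(x)$ be a family of density operators on a quantum system $Q$, depending differentiably on a real parameter $x$. Let $\{\mathcal{F}_\alpha\}_{\alpha=1}^{J}$ be a selection measurement on $Q$, where each $\mathcal{F}_\alpha(\rho)=\sum_{j=0}^{J_\alpha-1}M_{\alpha,j}\rho M_{\alpha,j}^\dagger$ is a quantum operation with Kraus operators $M_{\alpha,j}$ and $\sum_{\alpha=1}^J\sum_{j}M_{\alpha,j}^\dagger M_{\alpha,j}=\mathbb{1}_Q$. Write $p(\alpha|x)=\mathrm{Tr}\{\mathcal{F}_\alpha[\rho_Q(x)]\}$ (assumed positive) and $\sigma_{Q|\alpha}(x)=\mathcal{F}_\alpha[\rho_Q(x)]/p(\alpha|x)$. Let $\checkmark\subseteq\{1,\dots,J\}$ be a set of favorable outcomes with complement $\times$, and put $p(\checkmark|x)=\sum_{\alpha\in\checkmark}p(\alpha|x)$, $p(\times|x)=1-p(\checkmark|x)$, both assumed positive. Let $\{|f_\alpha\rangle\}_{\alpha=1}^J$ be orthonormal ancilla states, let $|f_0\rangle$ be an ancilla state orthogonal to all $|f_\alpha\rangle$ with $\alpha\in\checkmark$, and let $|\phi\rangle$ be a fixed state of $Q$ independent of $x$. Define $$\sigma_{QA}(x)=\sum_{\alpha=1}^J p(\alpha|x)\,\sigma_{Q|\alpha}(x)\otimes|f_\alpha\rangle\langle f_\alpha|,$$ $$\sigma_{QA,\checkmark}(x)=\sum_{\alpha\in\checkmark}p(\alpha|x)\,\sigma_{Q|\alpha}(x)\otimes|f_\alpha\rangle\langle f_\alpha|+p(\times|x)\,|\phi\rangle\langle\phi|\otimes|f_0\rangle\langle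 f_0|,$$ $$\sigma_{QA|\checkmark}(x)=\sum_{\alpha\in\checkmark}\frac{p(\alpha|x)}{p(\checkmark|x)}\,\sigma_{Q|\alpha}(x)\otimes|f_\alpha\rangle\langle f_\alpha|.$$ Then the quantum Fisher informations satisfy $$I_{\rho_Q}(x)\ge I_{\sigma_{QA}}(x)\ge I_{\sigma_{QA,\checkmark}}(x)\ge p(\checkmark|x)\,I_{\sigma_{QA|\checkmark}}(x).$$ Moreover, when $\checkmark=\{\alpha\}$ consists of a single outcome, $p(\checkmark|x)\,I_{\sigma_{QA|\checkmark}}(x)=p(\alpha|x)\,I_{\sigma_{Q|\alpha}}(x)$, so the final entry of the chain is $p(\alpha|x)I_{\sigma_{Q|\alpha}}(x)$.
   Context: For a differentiable family of density operators $\rho(x)$, the quantum Fisher information is $I_\rho(x)=\mathrm{Tr}[\rho(x)L(x)^2]$, where the symmetric logarithmic derivative $L(x)$ is a Hermitian operator satisfying $\partial_x\rho(x)=\tfrac12[L(x)\rho(x)+\rho(x)L(x)]$. *)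

(* Defs.v *)
From HB Require Import structures.
From mathcomp Require Import all_boot all_algebra.
From mathcomp Require Import complex mxtens.
From mathcomp Require Import reals topology normedtype derive.
Set Implicit Arguments.
Unset Strict Implicit.
Unset Printing Implicit Defensive.
Import GRing.Theory Num.Theory numFieldNormedType.Exports.
Local Open Scope ring_scope.

Section QDefs.
Variable R : realType.
Local Notation C := (R[i]).

Definition adjmx {p q : nat} (A : 'M[C]_(p, q)) : 'M[C]_(q, p) :=
  (map_mx (@conjc R) A)^T.

Definition hermitian {p : nat} (A : 'M[C]_p) : Prop := adjmx A = A.

(* positive semidefinite: <v|A|v> >= 0 for all v (order of R[i]: real and >= 0) *)
Definition psd {p : nat} (A : 'M[C]_p) : Prop :=
  forall v : 'cV[C]_p, 0 <= (adjmx v *m A *m v) 0 0.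

Definition density {p : nat} (A : 'M[C]_p) : Prop :=
  hermitian A /\ psd A /\ \tr A = 1.

Definition mx_is_derive {p q : nat} (F : R -> 'M[C]_(p, q)) (x : R)
    (D : 'M[C]_(p, q)) : Prop :=
  forall i j, is_derive x (1 : R) (fun y => complex.Re (F y i j)) (complex.Re (D i j)) /\
              is_derive x (1 : R) (fun y => complex.Im (F y i j)) (complex.Im (D i j)).

Definition mx_differentiable {p q : nat} (F : R -> 'M[C]_(p, q)) : Prop :=
  forall y, exists D, mx_is_derive F y D.

Definition is_SLD {p : nat} (rho : R -> 'M[C]_p) (x : R) (L : 'M[C]_p) : Prop :=
  hermitian L /\ exists D, mx_is_derive rho x D /\
    D = (2%:R : C)^-1 *: (L *m rho x + rho x *m L).

Definition qfi {p : nat} (rho : R -> 'M[C]_p) (x : R) (L : 'M[C]_p) : R :=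
  complex.Re (\tr (rho x *m (L *m L))).

Definition ketbra {p : nat} (f : 'cV[C]_p) : 'M[C]_p := f *m adjmx f.

Definition real_C (r : R) : C := Complex r 0.

Section Selection.
Variables (n m J : nat) (Ja : 'I_J -> nat)
  (M : forall a : 'I_J, 'I_(Ja a) -> 'M[C]_n) (rho : R -> 'M[C]_n).

Definition qop (a : 'I_J) (r : 'M[C]_n) : 'M[C]_n :=
  \sum_(j < Ja a) (@M a j *m r *m adjmx (@M a j)).

Definition prob (a : 'I_J) (x : R) : R := complex.Re (\tr (qop a (rho x))).

Definition sigma_cond (a : 'I_J) (x : R) : 'M[C]_n :=
  real_C (prob a x)^-1 *: qop a (rho x).

Variables (ok : {set 'I_J}) (f : 'I_J -> 'cV[C]_m) (f0 : 'cV[C]_m)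
  (phi : 'cV[C]_n).

Definition prob_ok (x : R) : R := \sum_(a in ok) prob a x.
Definition prob_no (x : R) : R := 1 - prob_ok x.

Definition sigma_QA (x : R) : 'M[C]_(n * m) :=
  \sum_(a < J) real_C (prob a x) *: (sigma_cond a x *t ketbra (f a)).

Definition sigma_QA_ok (x : R) : 'M[C]_(n * m) :=
  \sum_(a in ok) real_C (prob a x) *: (sigma_cond a x *t ketbra (f a))
  + real_C (prob_no x) *: (ketbra phi *t ketbra f0).

Definition sigma_QA_cond (x : R) : 'M[C]_(n * m) :=
  \sum_(a in ok) real_C (prob a x / prob_ok x) *: (sigma_cond a x *t ketbra (f a)).

End Selection.
End QDefs.

(* Main.v *)
Require Import Defs.
From HB Require Import structures.
From mathcomp Require Import all_boot all_algebra.
From mathcomp Require Import complex mxtens.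
From mathcomp Require Import reals topology normedtype derive.
Import GRing.Theory Num.Theory numFieldNormedType.Exports.
Local Open Scope ring_scope.
From mathcomp Require Import lra.

Set Implicit Arguments.
Unset Strict Implicit.
Unset Printing Implicit Defensive.

Section Lib.
Variable R : realType.
Local Notation C := (R[i]).

Lemma ReD (a b : C) : complex.Re (a + b) = complex.Re a + complex.Re b.
Proof. by case: a; case: b. Qed.
Lemma ImD (a b : C) : complex.Im (a + b) = complex.Im a + complex.Im b.
Proof. by case: a; case: b. Qed.
Lemma ReN (a : C) : complex.Re (- a) = - complex.Re a.
Proof. by case: a. Qed.
Lemma ImN (a : C) : complex.Im (- a) = - complex.Im a.
Proof. by case: a. Qed.
Lemma Re0 : complex.Re (0 : C) = 0. Proof. by []. Qed.
Lemma Im0 : complex.Im (0 : C) = 0. Proof. by []. Qed.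
Lemma ReB (a b : C) : complex.Re (a - b) = complex.Re a - complex.Re b.
Proof. by rewrite ReD ReN. Qed.
Lemma Re_sum (I : finType) (P : pred I) (F : I -> C) :
  complex.Re (\sum_(i | P i) F i) = \sum_(i | P i) complex.Re (F i).
Proof. exact: (big_morph _ ReD Re0). Qed.
Lemma Im_sum (I : finType) (P : pred I) (F : I -> C) :
  complex.Im (\sum_(i | P i) F i) = \sum_(i | P i) complex.Im (F i).
Proof. exact: (big_morph _ ImD Im0). Qed.
Lemma ReM (a b : C) : complex.Re (a * b) = complex.Re a * complex.Re b - complex.Im a * complex.Im b.
Proof. by case: a; case: b. Qed.
Lemma ImM (a b : C) : complex.Im (a * b) = complex.Re a * complex.Im b + complex.Im a * complex.Re b.
Proof. by case: a => a1 a2; case: b => b1 b2 /=; rewrite addrC. Qed.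
Lemma ReMr (r : R) (z : C) : complex.Re (real_C r * z) = r * complex.Re z.
Proof. by rewrite ReM /= mul0r subr0. Qed.
Lemma ImMr (r : R) (z : C) : complex.Im (real_C r * z) = r * complex.Im z.
Proof. by rewrite ImM /= mul0r addr0. Qed.
Lemma real_CM (a b : R) : real_C (a * b) = real_C a * real_C b.
Proof. by apply/eqP; rewrite eq_complex /= !mul0r mulr0 subr0 addr0 !eqxx. Qed.
Lemma real_C1 : real_C (1 : R) = 1. Proof. by []. Qed.
Lemma real_CD (a b : R) : real_C (a + b) = real_C a + real_C b.
Proof. by apply/eqP; rewrite eq_complex /= addr0 !eqxx. Qed.
Lemma real_CB (a b : R) : real_C (a - b) = real_C a - real_C b.
Proof. by apply/eqP; rewrite eq_complex /= subr0 !eqxx. Qed.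
Lemma real_C_sum (I : finType) (P : pred I) (F : I -> R) :
  real_C (\sum_(i | P i) F i) = \sum_(i | P i) real_C (F i).
Proof. exact: (big_morph _ real_CD). Qed.
Lemma ge0_real (z : C) : 0 <= z -> z = real_C (complex.Re z).
Proof. by case: z => a b; rewrite lecE /= => /andP[/eqP -> _]. Qed.
Lemma ge0_Re (z : C) : 0 <= z -> 0 <= complex.Re z.
Proof. by case: z => a b; rewrite lecE /= => /andP[_ ->]. Qed.
Lemma real_C_ge0 (r : R) : 0 <= r -> 0 <= real_C r.
Proof. by move=> h; rewrite lecE /= eqxx h. Qed.

Lemma adjmxE p q (A : 'M[C]_(p,q)) i j : adjmx A i j = (A j i)^*%C.
Proof. by rewrite /adjmx !mxE. Qed.
Lemma adjmxK p q (A : 'M[C]_(p,q)) : adjmx (adjmx A) = A.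
Proof. by apply/matrixP => i j; rewrite !adjmxE conjcK. Qed.
Lemma adjmxM p q r (A : 'M[C]_(p,q)) (B : 'M[C]_(q,r)) :
  adjmx (A *m B) = adjmx B *m adjmx A.
Proof. by rewrite /adjmx map_mxM trmx_mul. Qed.
Lemma adjmxD p q (A B : 'M[C]_(p,q)) : adjmx (A + B) = adjmx A + adjmx B.
Proof. by apply/matrixP => i j; rewrite !mxE rmorphD. Qed.
Lemma adjmxN p q (A : 'M[C]_(p,q)) : adjmx (- A) = - adjmx A.
Proof. by apply/matrixP => i j; rewrite !mxE rmorphN. Qed.
Lemma adjmxB p q (A B : 'M[C]_(p,q)) : adjmx (A - B) = adjmx A - adjmx B.
Proof. by rewrite adjmxD adjmxN. Qed.
Lemma adjmx0 p q : adjmx (0 : 'M[C]_(p,q)) = 0.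
Proof. by apply/matrixP => i j; rewrite !mxE rmorph0. Qed.
Lemma adjmxZ p q c (A : 'M[C]_(p,q)) : adjmx (c *: A) = c^*%C *: adjmx A.
Proof. by apply/matrixP => i j; rewrite !mxE rmorphM. Qed.
Lemma adjmx_real p q r (A : 'M[C]_(p,q)) : adjmx (real_C r *: A) = real_C r *: adjmx A.
Proof. by rewrite adjmxZ conjc_real. Qed.
Lemma adjmx_sum p q (I : finType) (P : pred I) (F : I -> 'M[C]_(p,q)) :
  adjmx (\sum_(i | P i) F i) = \sum_(i | P i) adjmx (F i).
Proof. exact: (big_morph _ (@adjmxD p q) (@adjmx0 p q)). Qed.
Lemma adjmx1 p : adjmx (1%:M : 'M[C]_p) = 1%:M.
Proof. by apply/matrixP => i j; rewrite !mxE eq_sym rmorph_nat. Qed.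

Lemma psd_trC p k (rho : 'M[C]_p) (B : 'M[C]_(k,p)) :
  psd rho -> 0 <= \tr (rho *m (adjmx B *m B)).
Proof.
move=> Hr; rewrite mulmxA mxtrace_mulC mulmxA /mxtrace.
apply: sumr_ge0 => i _.
have -> : (B *m rho *m adjmx B) i i =
   (adjmx (adjmx (row i B)) *m rho *m adjmx (row i B)) 0 0.
  rewrite adjmxK !mxE; apply: eq_bigr => j _; rewrite !mxE; congr (_ * _).
  by apply: eq_bigr => l _; rewrite !mxE.
exact: Hr.
Qed.

Lemma psd_tr p k (rho : 'M[C]_p) (B : 'M[C]_(k,p)) :
  psd rho -> 0 <= complex.Re (\tr (rho *m (adjmx B *m B))).
Proof. by move=> /(psd_trC B) /ge0_Re. Qed.

Lemma tr_sum n (I : finType) (P : pred I) (F : I -> 'M[C]_n) :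
  \tr (\sum_(i | P i) F i) = \sum_(i | P i) \tr (F i).
Proof. exact: raddf_sum. Qed.
Lemma trN n (A : 'M[C]_n) : \tr (- A) = - \tr A.
Proof. exact: raddfN. Qed.
Lemma trB n (A B : 'M[C]_n) : \tr (A - B) = \tr A - \tr B.
Proof. exact: raddfB. Qed.

Definition kr p q (I : finType) (K : I -> 'M[C]_(q,p)) (A : 'M[C]_p) : 'M[C]_q :=
  \sum_k K k *m A *m adjmx (K k).

Lemma core p q (I : finType) (K : I -> 'M[C]_(q,p)) (rho L D : 'M[C]_p) (Y : 'M[C]_q) :
  psd rho -> Defs.hermitian L -> Defs.hermitian Y ->
  D = (2%:R : C)^-1 *: (L *m rho + rho *m L) ->
  (forall k, K k *m (\sum_l adjmx (K l) *m K l) = K k) ->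
  2%:R * complex.Re (\tr (kr K D *m Y)) - complex.Re (\tr (kr K rho *m (Y *m Y)))
  <= complex.Re (\tr (rho *m (L *m L))).
Proof.
move=> Hr HL HY HD HK.
set G := \sum_k adjmx (K k) *m Y *m K k.
have HG : adjmx G = G.
  rewrite /G adjmx_sum; apply: eq_bigr => k _.
  by rewrite !adjmxM adjmxK HY mulmxA.
set H := \sum_k adjmx (K k) *m (Y *m Y) *m K k.
have E1 : \tr (kr K D *m Y) = \tr (D *m G).
  rewrite /kr mulmx_suml tr_sum /G mulmx_sumr tr_sum; apply: eq_bigr => k _.
  by rewrite -!mulmxA mxtrace_mulC -!mulmxA.
have E2 : \tr (kr K rho *m (Y *m Y)) = \tr (rho *m H).
  rewrite /kr mulmx_suml tr_sum /H mulmx_sumr tr_sum; apply: eq_bigr => k _.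
  by rewrite -!mulmxA mxtrace_mulC -!mulmxA.
have E3 : 2%:R * \tr (D *m G) = \tr (rho *m (G *m L)) + \tr (rho *m (L *m G)).
  rewrite HD -scalemxAl mxtraceZ mulrA mulfV ?mul1r; last by rewrite pnatr_eq0.
  rewrite mulmxDl mxtraceD; congr (_ + _); last by rewrite mulmxA.
  by rewrite -mulmxA mxtrace_mulC -mulmxA.
have P1 := psd_tr (G - L) Hr.
rewrite adjmxB HG HL mulmxBl !mulmxBr !trB !ReB in P1.
have GP : G *m (\sum_l adjmx (K l) *m K l) = G.
  rewrite /G !mulmx_suml; apply: eq_bigr => k _; by rewrite -mulmxA HK.
have P2 : H - G *m G = \sum_k adjmx (Y *m K k - K k *m G) *m (Y *m K k - K k *m G).
  transitivity (\sum_k (adjmx (K k) *m (Y *m Y) *m K k - (adjmx (K k) *m Y *m K k) *m G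
      - G *m (adjmx (K k) *m Y *m K k) + G *m (adjmx (K k) *m K k) *m G)); last first.
    apply: eq_bigr => k _.
    rewrite adjmxB !adjmxM HY HG mulmxBl !mulmxBr !mulmxA opprB.
    by rewrite [in RHS]addrA [in RHS]addrAC.
  rewrite !big_split /= !sumrN -?mulmx_suml -?mulmx_sumr -?mulmx_suml -?mulmx_sumr -/G -/H GP.
  by rewrite subrK.
have P3 : 0 <= complex.Re (\tr (rho *m (H - G *m G))).
  rewrite P2 mulmx_sumr tr_sum Re_sum; apply: sumr_ge0 => k _; exact: psd_tr.
rewrite mulmxBr trB ReB in P3.
rewrite E1 E2.
have -> : 2%:R * complex.Re (\tr (D *m G)) = complex.Re (2%:R * \tr (D *m G)).
  by rewrite !mulr_natl !mulr2n ReD.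
rewrite E3 ReD.
move: P1 P3; lra.
Qed.

Definition cder (g : R -> C) (x : R) (d : C) :=
  is_derive x (1:R) (fun y => complex.Re (g y)) (complex.Re d) /\
  is_derive x (1:R) (fun y => complex.Im (g y)) (complex.Im d).

Lemma is_derive_ext (f g : R -> R) (x d : R) :
  (forall y, f y = g y) -> is_derive x 1 f d -> is_derive x 1 g d.
Proof. by move=> e; have -> : f = g by apply: boolp.funext. Qed.

Lemma cder_ext g1 g2 x d : (forall y, g1 y = g2 y) -> cder g1 x d -> cder g2 x d.
Proof. by move=> e; have -> : g1 = g2 by apply: boolp.funext. Qed.

Lemma cder_unique g x d1 d2 : cder g x d1 -> cder g x d2 -> d1 = d2.
Proof.
case=> h1 h2 [h3 h4].
have e1 : complex.Re d1 = complex.Re d2 by rewrite -(@derive_val _ _ _ _ _ _ _ h1) -(@derive_val _ _ _ _ _ _ _ h3).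
have e2 : complex.Im d1 = complex.Im d2 by rewrite -(@derive_val _ _ _ _ _ _ _ h2) -(@derive_val _ _ _ _ _ _ _ h4).
by clear h1 h2 h3 h4; move: e1 e2; case: d1 => ? ?; case: d2 => ? ? /= -> ->.
Qed.

Lemma cder_const (c : C) x : cder (fun _ => c) x 0.
Proof. by split; apply: is_derive_cst. Qed.

Lemma cder_add g1 g2 x d1 d2 : cder g1 x d1 -> cder g2 x d2 ->
  cder (fun y => g1 y + g2 y) x (d1 + d2).
Proof.
case=> h1 h2 [h3 h4]; split.
  by rewrite ReD; apply: is_derive_ext (is_deriveD h1 h3) => y /=; rewrite ReD.
by rewrite ImD; apply: is_derive_ext (is_deriveD h2 h4) => y /=; rewrite ImD.
Qed.

Lemma cder_sum_seq (I : Type) (s : seq I) (P : pred I) (g : I -> R -> C) x (d : I -> C) :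
  (forall i, P i -> cder (g i) x (d i)) ->
  cder (fun y => \sum_(i <- s | P i) g i y) x (\sum_(i <- s | P i) d i).
Proof.
move=> h; elim: s => [|a s IH].
  by rewrite big_nil; apply: cder_ext (cder_const 0 x) => y; rewrite big_nil.
rewrite big_cons; case: ifP => Pa.
  by apply: cder_ext (cder_add (h a Pa) IH) => y; rewrite big_cons Pa.
by apply: cder_ext IH => y; rewrite big_cons Pa.
Qed.

Lemma cder_sum (I : finType) (P : pred I) (g : I -> R -> C) x (d : I -> C) :
  (forall i, P i -> cder (g i) x (d i)) ->
  cder (fun y => \sum_(i | P i) g i y) x (\sum_(i | P i) d i).
Proof. exact: cder_sum_seq. Qed.

Lemma cder_mulc g x d (c : C) : cder g x d -> cder (fun y => c * g y) x (c * d).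
Proof.
case=> h1 h2; split.
  rewrite ReM; apply: is_derive_ext (is_deriveB (is_deriveZ (complex.Re c) h1)
    (is_deriveZ (complex.Im c) h2)) => y /=; by rewrite ReM.
rewrite ImM; apply: is_derive_ext (is_deriveD (is_deriveZ (complex.Re c) h2)
    (is_deriveZ (complex.Im c) h1)) => y /=; by rewrite ImM.
Qed.

Lemma cder_mulcr g x d (c : C) : cder g x d -> cder (fun y => g y * c) x (d * c).
Proof. by move=> h; rewrite mulrC; apply: cder_ext (cder_mulc c h) => y; rewrite mulrC. Qed.

Lemma cder_realmul (r : R -> R) (r' : R) (g : R -> C) (x : R) (d : C) : is_derive x 1 r r' -> cder g x d ->
  cder (fun y => real_C (r y) * g y) x (real_C r' * g x + real_C (r x) * d).
Proof.
move=> hr [h1 h2]; split.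
  rewrite ReD !ReMr.
  apply: is_derive_ext (is_derive_eq (is_deriveM hr h1) _) => [y /=|]; first by rewrite ReMr.
  by rewrite /GRing.scale /= addrC mulrC.
rewrite ImD !ImMr.
apply: is_derive_ext (is_derive_eq (is_deriveM hr h2) _) => [y /=|]; first by rewrite ImMr.
by rewrite /GRing.scale /= addrC mulrC.
Qed.

Lemma mxder_ext p q (F G : R -> 'M[C]_(p,q)) x D :
  (forall y, F y = G y) -> mx_is_derive F x D -> mx_is_derive G x D.
Proof. by move=> e; have -> : F = G by apply: boolp.funext. Qed.

Lemma mxder_unique p q (F : R -> 'M[C]_(p,q)) x D1 D2 :
  mx_is_derive F x D1 -> mx_is_derive F x D2 -> D1 = D2.
Proof. by move=> h1 h2; apply/matrixP => i j; exact: cder_unique (h1 i j) (h2 i j). Qed.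

Lemma mxder_sum p q (I : finType) (P : pred I) (F : I -> R -> 'M[C]_(p,q)) x
  (D : I -> 'M[C]_(p,q)) : (forall k, P k -> mx_is_derive (F k) x (D k)) ->
  mx_is_derive (fun y => \sum_(k | P k) F k y) x (\sum_(k | P k) D k).
Proof.
move=> h i j; rewrite summxE.
apply: cder_ext (cder_sum (P:=P) (g := fun k y => F k y i j) (fun k Pk => h k Pk i j)) => y.
by rewrite summxE.
Qed.

Lemma mxder_add p q (F G : R -> 'M[C]_(p,q)) x D1 D2 :
  mx_is_derive F x D1 -> mx_is_derive G x D2 ->
  mx_is_derive (fun y => F y + G y) x (D1 + D2).
Proof.
move=> h1 h2 i j; rewrite mxE.
by apply: cder_ext (cder_add (h1 i j) (h2 i j)) => y; rewrite mxE.
Qed.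

Lemma mxder_mull r p q (A : 'M[C]_(r,p)) (F : R -> 'M[C]_(p,q)) (x : R) D :
  mx_is_derive F x D -> mx_is_derive (fun y => A *m F y) x (A *m D).
Proof.
move=> h i j; rewrite mxE.
apply: cder_ext (cder_sum (P:=xpredT) (g := fun k y => A i k * F y k j)
   (fun k _ => cder_mulc (A i k) (h k j))) => y.
by rewrite mxE.
Qed.

Lemma mxder_mulr r p q (B : 'M[C]_(q,r)) (F : R -> 'M[C]_(p,q)) (x : R) D :
  mx_is_derive F x D -> mx_is_derive (fun y => F y *m B) x (D *m B).
Proof.
move=> h i j; rewrite mxE.
apply: cder_ext (cder_sum (P:=xpredT) (g := fun k y => F y i k * B k j)
   (fun k _ => cder_mulcr (B k j) (h i k))) => y.
by rewrite mxE.
Qed.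

Lemma mxder_realscale p q (r : R -> R) (r' : R) (F : R -> 'M[C]_(p,q)) (x : R) D :
  is_derive x 1 r r' -> mx_is_derive F x D ->
  mx_is_derive (fun y => real_C (r y) *: F y) x (real_C r' *: F x + real_C (r x) *: D).
Proof.
move=> hr h i j; rewrite !mxE.
by apply: cder_ext (cder_realmul hr (h i j)) => y; rewrite mxE.
Qed.

Lemma tr_der p (F : R -> 'M[C]_p) (x : R) D :
  mx_is_derive F x D -> cder (fun y => \tr (F y)) x (\tr D).
Proof. by move=> h; apply: cder_sum => i _; exact: h. Qed.

Lemma kr_der p q (I : finType) (K : I -> 'M[C]_(q,p)) (F : R -> 'M[C]_p) (x : R) D :
  mx_is_derive F x D -> mx_is_derive (fun y => kr K (F y)) x (kr K D).
Proof.
move=> h; apply: mxder_sum => k _; apply: mxder_mulr; exact: mxder_mull.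
Qed.

Lemma psd_kr p q (I : finType) (K : I -> 'M[C]_(q,p)) A : psd A -> psd (kr K A).
Proof.
move=> hA v; rewrite /kr mulmx_sumr mulmx_suml summxE; apply: sumr_ge0 => k _.
have -> : adjmx v *m (K k *m A *m adjmx (K k)) *m v =
  adjmx (adjmx (K k) *m v) *m A *m (adjmx (K k) *m v).
  by rewrite adjmxM adjmxK !mulmxA.
exact: hA.
Qed.

Lemma psd_real p (A : 'M[C]_p) r : psd A -> 0 <= r -> psd (real_C r *: A).
Proof.
move=> hA hr v; rewrite -scalemxAr -scalemxAl mxE.
by apply: mulr_ge0; [exact: real_C_ge0|exact: hA].
Qed.

Lemma sld_tr p (rho L D : 'M[C]_p) :
  D = (2%:R : C)^-1 *: (L *m rho + rho *m L) -> \tr (D *m L) = \tr (rho *m (L *m L)).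
Proof.
move=> ->; rewrite -scalemxAl mxtraceZ mulmxDl mxtraceD -mulmxA mxtrace_mulC -mulmxA.
set t := \tr (rho *m _); rewrite -(mulr2n t) -[t *+ 2]mulr_natl mulrA mulVf ?mul1r //; by rewrite pnatr_eq0.
Qed.

Lemma sld_tr1 p (rho L D : 'M[C]_p) :
  D = (2%:R : C)^-1 *: (L *m rho + rho *m L) -> \tr D = \tr (rho *m L).
Proof.
move=> ->; rewrite mxtraceZ mxtraceD mxtrace_mulC.
set t := \tr (rho *m L); rewrite -(mulr2n t) -[t *+ 2]mulr_natl mulrA mulVf ?mul1r //; by rewrite pnatr_eq0.
Qed.

Lemma mono p q (I : finType) (K : I -> 'M[C]_(q,p)) (rho : R -> 'M[C]_p)
  (sig : R -> 'M[C]_q) (x : R) L L' :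
  (forall y, sig y = kr K (rho y)) -> psd (rho x) ->
  (forall k, K k *m (\sum_l adjmx (K l) *m K l) = K k) ->
  is_SLD rho x L -> is_SLD sig x L' -> qfi sig x L' <= qfi rho x L.
Proof.
move=> Hs Hp HK [HL [D [dD HD]]] [HL' [D' [dD' HD']]].
have eD : D' = kr K D.
  apply: mxder_unique dD' _; apply: mxder_ext (kr_der K dD) => y; by rewrite Hs.
have := core Hp HL HL' HD HK.
rewrite /qfi -eD -Hs (sld_tr HD').
lra.
Qed.

Lemma sum_delta p (u : 'I_p) (F : 'I_p -> C) : \sum_k ((u == k)%:R * F k) = F u.
Proof.
rewrite (bigD1 u) //= eqxx mul1r big1 ?addr0 // => k /negbTE.
by rewrite eq_sym => ->; rewrite mul0r.
Qed.

Lemma sum_tens p q (F : 'I_p * 'I_q -> C) :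
  \sum_(i < p * q) F (mxtens_unindex i) = \sum_(a < p) \sum_(b < q) F (a, b).
Proof.
rewrite pair_big (reindex (@mxtens_index p q)) /=; last first.
  by exists (@mxtens_unindex p q) => ? _; rewrite (mxtens_indexK, mxtens_unindexK).
by apply: eq_bigr => -[a b] _; rewrite mxtens_indexK.
Qed.

Definition Vm n m (g : 'cV[C]_m) : 'M[C]_(n * m, n) :=
  \matrix_(i, k) (((mxtens_unindex i).1 == k)%:R * g (mxtens_unindex i).2 0).

Lemma VmL1 n m (g1 g2 : 'cV[C]_m) (A : 'M[C]_n) :
  Vm n g1 *m A *m adjmx (Vm n g2) = A *t (g1 *m adjmx g2).
Proof.
apply/matrixP => i j.
case: (mxtens_indexP i) => i1 i2; case: (mxtens_indexP j) => j1 j2.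
rewrite tensmxE.
have e1 : forall l, (Vm n g1 *m A) (mxtens_index (i1, i2)) l = g1 i2 0 * A i1 l.
  move=> l; rewrite mxE (eq_bigr (fun k => ((i1 == k)%:R * (g1 i2 0 * A k l)))) ?sum_delta //.
  by move=> k _; rewrite mxE mxtens_indexK /= mulrA.
rewrite mxE (eq_bigr (fun l => (j1 == l)%:R * (g1 i2 0 * A i1 l * (g2 j2 0)^*%C))).
  rewrite sum_delta mxE big_ord1 !mxE mulrCA mulrA; congr (_ * _); by rewrite mulrC.
move=> l _; rewrite e1 adjmxE mxE mxtens_indexK /= rmorphM rmorph_nat.
by rewrite mulrCA.
Qed.

Lemma VmL2 n m (g1 g2 : 'cV[C]_m) :
  adjmx (Vm n g1) *m Vm n g2 = (adjmx g1 *m g2) 0 0 *: 1%:M.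
Proof.
apply/matrixP => k k'.
pose G := fun ab : 'I_n * 'I_m =>
  (k == ab.1)%:R * ((ab.1 == k')%:R * ((g1 ab.2 0)^*%C * g2 ab.2 0)).
rewrite mxE (eq_bigr (fun i => G (mxtens_unindex i))); last first.
  move=> i _; rewrite adjmxE !mxE rmorphM rmorph_nat /G /=.
  by rewrite [k == _]eq_sym -!mulrA; congr (_ * _); rewrite mulrCA.
rewrite sum_tens /G /= (eq_bigr (fun a => (k == a)%:R * ((a == k')%:R *
     \sum_(b < m) (g1 b 0)^*%C * g2 b 0))).
  rewrite sum_delta !mxE mulrC; congr (_ * _); apply: eq_bigr => b _; by rewrite !mxE.
by move=> a _; rewrite !mulr_sumr.
Qed.
End Lib.

Unset Implicit Arguments.
Set Strict Implicit.

Section Main.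
Variable R : realType.
Local Notation C := (R[i]).
Variables (n m J : nat) (Ja : 'I_J -> nat)
  (M : forall a : 'I_J, 'I_(Ja a) -> 'M[C]_n)
  (rho : R -> 'M[C]_n)
  (ok : {set 'I_J}) (f : 'I_J -> 'cV[C]_m) (f0 : 'cV[C]_m)
  (phi : 'cV[C]_n).
Hypotheses (Hrho : forall y, density (rho y))
  (Hkraus : \sum_(a < J) \sum_(j < Ja a) (adjmx (M a j) *m M a j) = 1%:M)
  (Hpos : forall a y, 0 < prob M rho a y)
  (Hok : forall y, 0 < prob_ok M rho ok y)
  (Hf : forall a b, adjmx (f a) *m f b = (a == b)%:R%:M)
  (Hf0 : adjmx f0 *m f0 = 1%:M)
  (Hf0ok : forall a, a \in ok -> adjmx (f a) *m f0 = 0)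
  (Hphi : adjmx phi *m phi = 1%:M).

Local Notation p a y := (prob M rho a y).
Local Notation Q a y := (qop M a (rho y)).
Local Notation V a := (Vm n (f a)).
Local Notation V0 := (Vm n f0).
Local Notation w := (Vm n f0 *m phi).

Lemma qop_kr a A : qop M a A = kr (M a) A.
Proof. by []. Qed.

Lemma psd_Q a y : psd (Q a y).
Proof. rewrite qop_kr; apply: psd_kr; by case: (Hrho y) => _ []. Qed.

Lemma tr_Q a y : \tr (Q a y) = real_C (p a y).
Proof.
have := psd_trC (1%:M : 'M[C]_n) (psd_Q a y).
by rewrite adjmx1 !mulmx1 => /ge0_real.
Qed.

Lemma sum_p y : \sum_a p a y = 1.
Proof.
rewrite /prob -Re_sum -tr_sum.
have -> : \sum_a qop M a (rho y) = \sum_a \sum_(j < Ja a) M a j *m rho y *m adjmx (M a j) by [].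
have -> : \tr (\sum_a \sum_(j < Ja a) M a j *m rho y *m adjmx (M a j)) =
          \tr ((\sum_(a < J) \sum_(j < Ja a) (adjmx (M a j) *m M a j)) *m rho y).
  rewrite tr_sum mulmx_suml tr_sum; apply: eq_bigr => a _.
  rewrite tr_sum mulmx_suml tr_sum; apply: eq_bigr => j _.
  by rewrite mxtrace_mulC mulmxA.
by rewrite Hkraus mul1mx; case: (Hrho y) => _ [_ ->].
Qed.

Lemma pQ a y : real_C (p a y) *: sigma_cond M rho a y = Q a y.
Proof.
rewrite /sigma_cond scalerA -real_CM mulfV ?scale1r //.
by apply: lt0r_neq0; exact: Hpos.
Qed.

Lemma VV a b : adjmx (V a) *m V b = (a == b)%:R *: 1%:M.
Proof. by rewrite VmL2 Hf mxE eqxx mulr1n. Qed.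

Lemma VV0 a : a \in ok -> adjmx (V a) *m V0 = 0.
Proof. by move=> h; rewrite VmL2 Hf0ok // mxE scale0r. Qed.

Lemma V0V a : a \in ok -> adjmx V0 *m V a = 0.
Proof. by move=> h; rewrite -[V a]adjmxK -adjmxM VV0 // adjmx0. Qed.

Lemma ww : adjmx w *m w = 1%:M.
Proof.
by rewrite adjmxM -mulmxA [adjmx V0 *m _]mulmxA VmL2 Hf0 mxE eqxx mulr1n scale1r mul1mx.
Qed.

Lemma tens_V a (A : 'M[C]_n) : A *t ketbra (f a) = V a *m A *m adjmx (V a).
Proof. by rewrite VmL1. Qed.

Lemma V_kr (g : 'cV[C]_m) q (I : finType) (K : I -> 'M[C]_(n,q)) (A : 'M[C]_q) :
  Vm n g *m kr K A *m adjmx (Vm n g) = kr (fun k => Vm n g *m K k) A.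
Proof.
rewrite /kr mulmx_sumr mulmx_suml; apply: eq_bigr => k _.
by rewrite adjmxM !mulmxA.
Qed.

Lemma sumQA y : sigma_QA M rho f y = \sum_a V a *m Q a y *m adjmx (V a).
Proof.
apply: eq_bigr => a _; by rewrite tens_V scalemxAl scalemxAr pQ.
Qed.

Definition K1 (t : {a : 'I_J & 'I_(Ja a)}) : 'M[C]_(n * m, n) :=
  V (tag t) *m M (tag t) (tagged t).

Lemma sigQA_kr y : sigma_QA M rho f y = kr K1 (rho y).
Proof.
rewrite sumQA.
rewrite (eq_bigr (fun a => \sum_(j < Ja a) (V a *m M a j) *m rho y *m adjmx (V a *m M a j))); last first.
  by move=> a _; rewrite qop_kr V_kr.
rewrite /kr (sig_big_dep xpredT (fun _ _ => true)
  (fun a j => (V a *m M a j) *m rho y *m adjmx (V a *m M a j))) /=.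
by [].
Qed.

Lemma P1 : \sum_t adjmx (K1 t) *m K1 t = 1%:M.
Proof.
rewrite -Hkraus (sig_big_dep xpredT (fun _ _ => true) (fun a j => adjmx (M a j) *m M a j)) /=.
apply: eq_bigr => t _.
by rewrite /K1 adjmxM -mulmxA [adjmx (V _) *m _]mulmxA VV eqxx scale1r mul1mx.
Qed.

Lemma step1 x L1 L2 : is_SLD rho x L1 -> is_SLD (sigma_QA M rho f) x L2 ->
  qfi (sigma_QA M rho f) x L2 <= qfi rho x L1.
Proof.
apply: mono; first exact: sigQA_kr.
  by case: (Hrho x) => _ [].
by move=> k; rewrite P1 mulmx1.
Qed.

Lemma sum_deltaZ p q (I : finType) (a : I) (F : I -> 'M[C]_(p,q)) :
  \sum_b ((a == b)%:R *: F b) = F a.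
Proof.
rewrite (bigD1 a) //= eqxx scale1r big1 ?addr0 // => b /negbTE.
by rewrite eq_sym => ->; rewrite scale0r.
Qed.

Definition e (k : 'I_n) : 'cV[C]_n := delta_mx k 0.

Lemma adj_e k : adjmx (e k) = delta_mx 0 k.
Proof. by apply/matrixP => i j; rewrite adjmxE !mxE rmorph_nat andbC. Qed.

Lemma sum_e : \sum_k e k *m adjmx (e k) = 1%:M.
Proof.
apply/matrixP => i j; rewrite summxE.
rewrite (eq_bigr (fun k => (i == k)%:R * (j == k)%:R)).
  by rewrite (eq_bigr (fun k => (i == k)%:R * (j == k)%:R)) // sum_delta !mxE eq_sym.
move=> k _; rewrite adj_e mul_delta_mx !mxE.
by case: (i == k); case: (j == k); rewrite /= ?mulr1 ?mulr0.
Qed.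

Lemma sum_eAe (A : 'M[C]_n) : \sum_k adjmx (e k) *m A *m e k = (\tr A)%:M.
Proof.
apply/matrixP => i j; rewrite !ord1 summxE !mxE eqxx mulr1n /mxtrace.
apply: eq_bigr => k _; by rewrite adj_e /e -rowE -colE !mxE.
Qed.

Definition K2 (i : ('I_J + 'I_J * 'I_n)%type) : 'M[C]_(n * m) :=
  match i with
  | inl a => if a \in ok then V a *m adjmx (V a) else 0
  | inr q => if q.1 \in ok then 0 else w *m adjmx (V q.1 *m e q.2)
  end.

Lemma sumI2 q (G : ('I_J + 'I_J * 'I_n)%type -> 'M[C]_q) :
  \sum_i G i = \sum_a (G (inl a) + \sum_k G (inr (a, k))).
Proof.
rewrite big_sumType big_split /= pair_big /=.
by congr (_ + _); apply: eq_bigr => -[a k].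
Qed.

Lemma VP a : adjmx (V a) *m (\sum_b V b *m adjmx (V b)) = adjmx (V a).
Proof.
rewrite mulmx_sumr (eq_bigr (fun b => (a == b)%:R *: adjmx (V b))) ?sum_deltaZ //.
by move=> b _; rewrite mulmxA VV -scalemxAl mul1mx.
Qed.

Lemma P2 : \sum_i adjmx (K2 i) *m K2 i = \sum_b V b *m adjmx (V b).
Proof.
rewrite sumI2; apply: eq_bigr => a _; rewrite /K2 /=.
have [ha|ha] := boolP (a \in ok).
  rewrite big1 ?addr0; last by move=> k _; rewrite adjmx0 mul0mx.
  by rewrite adjmxM adjmxK mulmxA -[V a *m _ *m V a]mulmxA VV eqxx scale1r mulmx1.
rewrite adjmx0 mul0mx add0r.
rewrite (eq_bigr (fun k => V a *m (e k *m adjmx (e k)) *m adjmx (V a))).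
  by rewrite -mulmx_suml -mulmx_sumr sum_e mulmx1.
by move=> k _; rewrite adjmxM adjmxK -mulmxA (mulmxA (adjmx w)) ww mul1mx adjmxM !mulmxA.
Qed.

Lemma K2P i : K2 i *m (\sum_j adjmx (K2 j) *m K2 j) = K2 i.
Proof.
rewrite P2; case: i => [a|[a k]] /=.
  by case: ifP => _; rewrite ?mul0mx // -mulmxA VP.
case: ifP => _; first by rewrite mul0mx.
by rewrite adjmxM -!mulmxA VP.
Qed.

Lemma VsV a y : adjmx (V a) *m sigma_QA M rho f y *m V a = Q a y.
Proof.
rewrite sumQA mulmx_sumr mulmx_suml.
rewrite (eq_bigr (fun b => (a == b)%:R *: ((a == b)%:R *: Q b y))).
  by rewrite (@sum_deltaZ _ _ _ a (fun b => (a == b)%:R *: Q b y)) eqxx scale1r.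
move=> b _; rewrite !mulmxA VV -scalemxAl mul1mx -mulmxA VV -scalemxAr mulmx1.
by rewrite eq_sym.
Qed.

Lemma pno_sum y : prob_no M rho ok y = \sum_(a | a \notin ok) p a y.
Proof.
rewrite /prob_no /prob_ok -(sum_p y) (bigID (fun a => a \in ok)) /=.
by rewrite addrAC subrr add0r.
Qed.

Lemma ww_tens : w *m adjmx w = ketbra phi *t ketbra f0.
Proof. by rewrite -VmL1 adjmxM !mulmxA. Qed.

Lemma phi2 y : kr K2 (sigma_QA M rho f y) = sigma_QA_ok M rho ok f f0 phi y.
Proof.
set s := sigma_QA M rho f y.
rewrite /kr sumI2.
transitivity (\sum_a (if a \in ok then V a *m Q a y *m adjmx (V a)
                       else \tr (Q a y) *: (w *m adjmx w))).
  apply: eq_bigr => a _; rewrite /K2 /=; case: ifP => ha.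
    rewrite big1 ?addr0; last by move=> k _; rewrite !mul0mx.
    have -> : V a *m adjmx (V a) *m s *m adjmx (V a *m adjmx (V a)) =
      V a *m (adjmx (V a) *m s *m V a) *m adjmx (V a) by rewrite adjmxM adjmxK !mulmxA.
    by rewrite VsV.
  rewrite !mul0mx add0r.
  rewrite (eq_bigr (fun k => w *m (adjmx (e k) *m Q a y *m e k) *m adjmx w)).
    by rewrite -mulmx_suml -mulmx_sumr sum_eAe mul_mx_scalar scalemxAl.
  move=> k _; rewrite -VsV.
  by rewrite !adjmxM !adjmxK !mulmxA.
rewrite /sigma_QA_ok (bigID (fun a => a \in ok)) /=; congr (_ + _).
  apply: eq_big => // a ha; rewrite ha tens_V scalemxAl scalemxAr pQ //.
rewrite (eq_bigr (fun a => \tr (Q a y) *: (w *m adjmx w))); last first.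
  by move=> a /negbTE ->.
rewrite -scaler_suml ww_tens pno_sum real_C_sum; congr (_ *: _).
by apply: eq_bigr => a _; rewrite tr_Q.
Qed.

Lemma psd_QA y : psd (sigma_QA M rho f y).
Proof. rewrite sigQA_kr; apply: psd_kr; by case: (Hrho y) => _ []. Qed.

Lemma step2 x L2 L3 : is_SLD (sigma_QA M rho f) x L2 ->
  is_SLD (sigma_QA_ok M rho ok f f0 phi) x L3 ->
  qfi (sigma_QA_ok M rho ok f f0 phi) x L3 <= qfi (sigma_QA M rho f) x L2.
Proof.
apply: (@mono _ _ _ _ K2); first by move=> y; rewrite phi2.
  exact: psd_QA.
exact: K2P.
Qed.

Definition S y := \sum_(a in ok) V a *m Q a y *m adjmx (V a).
Definition K3 (a : 'I_J) : 'M[C]_(n * m) := if a \in ok then V a *m adjmx (V a) else 0.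

Lemma sok y : sigma_QA_ok M rho ok f f0 phi y = S y + real_C (prob_no M rho ok y) *: (w *m adjmx w).
Proof.
rewrite /sigma_QA_ok ww_tens; congr (_ + _).
by apply: eq_bigr => a _; rewrite tens_V scalemxAl scalemxAr pQ.
Qed.

Lemma scond y : real_C (prob_ok M rho ok y) *: sigma_QA_cond M rho ok f y = S y.
Proof.
rewrite /sigma_QA_cond scaler_sumr; apply: eq_bigr => a _.
rewrite scalerA -real_CM mulrCA mulfV ?mulr1; last by apply: lt0r_neq0; exact: Hok.
by rewrite tens_V scalemxAl scalemxAr pQ.
Qed.

Lemma sum_deltaZ_in p q (I : finType) (P : pred I) (a : I) (F : I -> 'M[C]_(p,q)) :
  P a -> \sum_(b | P b) ((a == b)%:R *: F b) = F a.
Proof.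
move=> Pa; rewrite (bigD1 a) //= eqxx scale1r big1 ?addr0 // => b /andP[_ /negbTE].
by rewrite eq_sym => ->; rewrite scale0r.
Qed.

Lemma P3 : \sum_a adjmx (K3 a) *m K3 a = \sum_(b in ok) V b *m adjmx (V b).
Proof.
rewrite [RHS]big_mkcond; apply: eq_bigr => a _; rewrite /K3; case: ifP => _.
  by rewrite adjmxM adjmxK mulmxA -[V a *m _ *m V a]mulmxA VV eqxx scale1r mulmx1.
by rewrite adjmx0 mul0mx.
Qed.

Lemma VP3 a : a \in ok ->
  adjmx (V a) *m (\sum_(b in ok) V b *m adjmx (V b)) = adjmx (V a).
Proof.
move=> ha; rewrite mulmx_sumr (eq_bigr (fun b => (a == b)%:R *: adjmx (V b))).
  exact: (@sum_deltaZ_in _ _ _ (fun b => b \in ok) a (fun b => adjmx (V b))).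
by move=> b _; rewrite mulmxA VV -scalemxAl mul1mx.
Qed.

Lemma K3P a : K3 a *m (\sum_j adjmx (K3 j) *m K3 j) = K3 a.
Proof.
rewrite P3 /K3; case: ifP => ha; last by rewrite mul0mx.
by rewrite -mulmxA VP3.
Qed.

Lemma VsokV a y : a \in ok -> adjmx (V a) *m sigma_QA_ok M rho ok f f0 phi y *m V a = Q a y.
Proof.
move=> ha; rewrite sok mulmxDr mulmxDl -scalemxAr -scalemxAl.
rewrite !mulmxA (VV0 a ha) !mul0mx scaler0 addr0.
rewrite /S mulmx_sumr mulmx_suml.
rewrite (eq_bigr (fun b => (a == b)%:R *: ((a == b)%:R *: Q b y))).
  by rewrite (@sum_deltaZ_in _ _ _ (fun b => b \in ok) a (fun b => (a == b)%:R *: Q b y)) // eqxx scale1r.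
move=> b _; rewrite !mulmxA VV -scalemxAl mul1mx -mulmxA VV -scalemxAr mulmx1.
by rewrite eq_sym.
Qed.

Lemma phi3 y : kr K3 (sigma_QA_ok M rho ok f f0 phi y) = S y.
Proof.
rewrite /kr /S [RHS]big_mkcond; apply: eq_bigr => a _; rewrite /K3; case: ifP => ha.
  have -> : forall s, V a *m adjmx (V a) *m s *m adjmx (V a *m adjmx (V a)) =
      V a *m (adjmx (V a) *m s *m V a) *m adjmx (V a) by move=> s; rewrite adjmxM adjmxK !mulmxA.
  by rewrite VsokV.
by rewrite !mul0mx.
Qed.

Lemma trS y : complex.Re (\tr (S y)) = prob_ok M rho ok y.
Proof.
rewrite /S tr_sum Re_sum; apply: eq_bigr => a _.
by rewrite mxtrace_mulC mulmxA VV eqxx scale1r mul1mx tr_Q.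
Qed.

Lemma trc1 y : complex.Re (\tr (sigma_QA_cond M rho ok f y)) = 1.
Proof.
have h : prob_ok M rho ok y != 0 by apply: lt0r_neq0; exact: Hok.
apply: (mulfI h); rewrite mulr1 -ReMr -mxtraceZ scond; exact: trS.
Qed.

Lemma psd_ok y : psd (sigma_QA_ok M rho ok f f0 phi y).
Proof. rewrite -phi2; apply: psd_kr; exact: psd_QA. Qed.

Lemma step3 x L3 L4 : is_SLD (sigma_QA_ok M rho ok f f0 phi) x L3 ->
  is_SLD (sigma_QA_cond M rho ok f) x L4 ->
  prob_ok M rho ok x * qfi (sigma_QA_cond M rho ok f) x L4 <=
  qfi (sigma_QA_ok M rho ok f f0 phi) x L3.
Proof.
move=> [HL3 [D3 [dD3 HD3]]] [HL4 [D4 [dD4 HD4]]].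
have dS := kr_der K3 dD3.
have dp : is_derive x 1 (prob_ok M rho ok) (complex.Re (\tr (kr K3 D3))).
  by apply: is_derive_ext (tr_der dS).1 => y; rewrite phi3 trS.
have eE : kr K3 D3 = real_C (complex.Re (\tr (kr K3 D3))) *: sigma_QA_cond M rho ok f x
   + real_C (prob_ok M rho ok x) *: D4.
  apply: mxder_unique dS _; apply: mxder_ext (mxder_realscale dp dD4) => y.
  by rewrite scond phi3.
have t0 : complex.Re (\tr D4) = 0.
  have h := (tr_der dD4).1.
  have h0 : is_derive x 1 (fun y => complex.Re (\tr (sigma_QA_cond M rho ok f y))) 0.
    by apply: is_derive_ext (is_derive_cst (1:R) x 1) => y; rewrite trc1.
  by rewrite -(@derive_val _ _ _ _ _ _ _ h) (@derive_val _ _ _ _ _ _ _ h0).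
have := core (psd_ok x) HL3 HL4 HD3 K3P.
rewrite eE phi3 -scond mulmxDl -!scalemxAl mxtraceD !mxtraceZ ReD !ReMr.
rewrite -(sld_tr1 HD4) t0 (sld_tr HD4) /qfi mulr0 add0r.
set I := complex.Re _; set pk := prob_ok _ _ _ _; set Q3 := complex.Re _.
lra.
Qed.

Lemma pok_single a0 y : ok = [set a0] -> prob_ok M rho ok y = p a0 y.
Proof. by move=> hok; rewrite /prob_ok hok big_set1. Qed.

Lemma cond_single a0 y : ok = [set a0] ->
  sigma_QA_cond M rho ok f y = V a0 *m sigma_cond M rho a0 y *m adjmx (V a0).
Proof.
move=> hok; rewrite /sigma_QA_cond (pok_single a0 y hok) hok big_set1 mulfV.
  by rewrite real_C1 scale1r tens_V.
by apply: lt0r_neq0; exact: Hpos.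
Qed.

Lemma psd_cond a y : psd (sigma_cond M rho a y).
Proof.
apply: psd_real; first exact: psd_Q.
by rewrite invr_ge0 le0r Hpos orbT.
Qed.

Lemma part2 a0 x L4 L5 : ok = [set a0] ->
  is_SLD (sigma_QA_cond M rho ok f) x L4 -> is_SLD (sigma_cond M rho a0) x L5 ->
  prob_ok M rho ok x * qfi (sigma_QA_cond M rho ok f) x L4 =
  p a0 x * qfi (sigma_cond M rho a0) x L5.
Proof.
move=> hok h4 h5.
pose Ka := fun _ : 'I_1 => V a0.
pose Kb := fun _ : 'I_1 => adjmx (V a0).
have le1 : qfi (sigma_QA_cond M rho ok f) x L4 <= qfi (sigma_cond M rho a0) x L5.
  apply: (@mono _ _ _ _ Ka) h5 h4.
  - by move=> y; rewrite (cond_single a0 y hok) /kr big_ord1.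
  - exact: psd_cond.
  - by move=> k; rewrite big_ord1 VV eqxx scale1r mulmx1.
have le2 : qfi (sigma_cond M rho a0) x L5 <= qfi (sigma_QA_cond M rho ok f) x L4.
  apply: (@mono _ _ _ _ Kb) h4 h5.
  - move=> y; rewrite (cond_single a0 y hok) /kr big_ord1 adjmxK.
    by rewrite !mulmxA VV eqxx scale1r mul1mx -mulmxA VV eqxx scale1r mulmx1.
  - rewrite (cond_single a0 x hok).
    have -> : V a0 *m sigma_cond M rho a0 x *m adjmx (V a0) = kr Ka (sigma_cond M rho a0 x).
      by rewrite /kr big_ord1.
    apply: psd_kr; exact: psd_cond.
  - by move=> k; rewrite big_ord1 adjmxK mulmxA VV eqxx scale1r mul1mx.
rewrite (pok_single a0 x hok); congr (_ * _).
by apply/eqP; rewrite order.Order.POrderTheory.eq_le le1 le2.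
Qed.
End Main.

Theorem theorem1 (R : realType) (n m J : nat) (Ja : 'I_J -> nat)
  (M : forall a : 'I_J, 'I_(Ja a) -> 'M[R[i]]_n)
  (rho : R -> 'M[R[i]]_n)
  (ok : {set 'I_J}) (f : 'I_J -> 'cV[R[i]]_m) (f0 : 'cV[R[i]]_m)
  (phi : 'cV[R[i]]_n) (x : R)
  (Hrho : forall y, density (rho y))
  (Hdiff : mx_differentiable rho)
  (Hkraus : \sum_(a < J) \sum_(j < Ja a) (adjmx (M a j) *m M a j) = 1%:M)
  (Hpos : forall a y, 0 < prob M rho a y)
  (Hok : forall y, 0 < prob_ok M rho ok y)
  (Hno : forall y, 0 < prob_no M rho ok y)
  (Hf : forall a b, adjmx (f a) *m f b = (a == b)%:R%:M)
  (Hf0 : adjmx f0 *m f0 = 1%:M)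
  (Hf0ok : forall a, a \in ok -> adjmx (f a) *m f0 = 0)
  (Hphi : adjmx phi *m phi = 1%:M) :
  (forall L1 L2 L3 L4 : 'M[R[i]]_ _,
     is_SLD rho x L1 ->
     is_SLD (sigma_QA M rho f) x L2 ->
     is_SLD (sigma_QA_ok M rho ok f f0 phi) x L3 ->
     is_SLD (sigma_QA_cond M rho ok f) x L4 ->
     qfi rho x L1 >= qfi (sigma_QA M rho f) x L2 /\
     qfi (sigma_QA M rho f) x L2 >= qfi (sigma_QA_ok M rho ok f f0 phi) x L3 /\
     qfi (sigma_QA_ok M rho ok f f0 phi) x L3 >=
       prob_ok M rho ok x * qfi (sigma_QA_cond M rho ok f) x L4) /\
  (forall a0 : 'I_J, ok = [set a0] ->
   forall L4 L5,
     is_SLD (sigma_QA_cond M rho ok f) x L4 ->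
     is_SLD (sigma_cond M rho a0) x L5 ->
     prob_ok M rho ok x * qfi (sigma_QA_cond M rho ok f) x L4 =
       prob M rho a0 x * qfi (sigma_cond M rho a0) x L5).
Proof.
split.
  move=> L1 L2 L3 L4 h1 h2 h3 h4; split; last split.
  - exact: (@step1 _ _ _ _ _ _ _ _ Hrho Hkraus Hpos Hf _ _ _ h1 h2).
  - exact: (@step2 _ _ _ _ _ _ _ _ _ _ _ Hrho Hkraus Hpos Hf Hf0 Hphi _ _ _ h2 h3).
  - exact: (@step3 _ _ _ _ _ _ _ _ _ _ _ Hrho Hkraus Hpos Hok Hf Hf0ok _ _ _ h3 h4).
move=> a0 hok L4 L5 h4 h5.
exact: (@part2 _ _ _ _ _ _ _ _ _ Hrho Hpos Hf _ _ _ _ hok h4 h5).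
Qed.
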